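(* Let $\mathcal{U}$ be the map $(\beta,u)\mapsto\mathcal{U}(\beta,u)=\int_0^1\mathcal{K}(\beta)(1-y)u(y)\,dy\in\mathbb{R}$, defined on pairs $(\beta,u)$ of continuous functions on $[0,1]$. For arbitrary $B_\beta,B_u>0$, $\mathcal U$ is Lipschitz on the set of pairs of Lipschitz functions with $\|\beta\|_\infty\le B_\beta$, $\|u\|_\infty\le B_u$: for any two such pairs, $$|\mathcal U(\beta_1,u_1)-\mathcal U(\beta_2,u_2)|\le\big(B_\beta e^{B_\beta}+B_ue^{3B_\beta}\big)\,\|(\beta_1-\beta_2,u_1-u_2)\|_\infty,$$ where $\|(a,b)\|_\infty=\max(\|a\|_\infty,\|b\|_\infty)$.
   Context: The backstepping kernel operator $\mathcal{K}$ maps $\beta\in C^0[0,1]$ to the solution $k$ of $k(x)=-\beta(x)+\int_0^x\beta(x-y)k(y)\,dy$, $x\in[0,1]$. $\|\cdot\|_\infty$ is the supremum norm on $[0,1]$. *)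

(* Defs.v *)
From Stdlib Require Import Reals ClassicalEpsilon.
From Coquelicot Require Import Coquelicot.
Open Scope R_scope.

Definition I01 (x : R) : Prop := 0 <= x <= 1.

Definition cont01 (f : R -> R) : Prop :=
  forall x, I01 x -> filterlim f (within I01 (locally x)) (locally (f x)).

Definition lip01 (f : R -> R) : Prop :=
  exists L : R, forall x y, I01 x -> I01 y -> Rabs (f x - f y) <= L * Rabs (x - y).

Definition supn (f : R -> R) : R :=
  real (Lub_Rbar (fun r => exists x, I01 x /\ r = Rabs (f x))).

Definition kernel_sol (beta k : R -> R) : Prop :=
  cont01 k /\
  forall x, I01 x -> k x = - beta x + RInt (fun y => beta (x - y) * k y) 0 x.

Definition Kop (beta : R -> R) : R -> R :=
  epsilon (inhabits (fun _ : R => 0)) (kernel_sol beta).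

Definition Uop (beta u : R -> R) : R :=
  RInt (fun y => Kop beta (1 - y) * u y) 0 1.

(* Main.v *)
Require Import Defs.
From Stdlib Require Import Reals Lra Lia ClassicalEpsilon.
From Coquelicot Require Import Coquelicot.
Open Scope R_scope.


Definition cl (x : R) : R := Rmax 0 (Rmin 1 x).
Definition ext (f : R -> R) (x : R) : R := f (cl x).

Lemma cl_I01 x : I01 (cl x).
Proof. unfold cl, I01, Rmax, Rmin; repeat destruct Rle_dec; lra. Qed.

Lemma cl_id x : I01 x -> cl x = x.
Proof. unfold cl, I01, Rmax, Rmin; intros; repeat destruct Rle_dec; lra. Qed.

Lemma cl_lip x y : Rabs (cl x - cl y) <= Rabs (x - y).
Proof.
  unfold cl, Rmax, Rmin; repeat destruct Rle_dec;
  unfold Rabs; repeat destruct Rcase_abs; lra.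
Qed.

Lemma lip_cont (h : R -> R) L :
  (forall x y, Rabs (h x - h y) <= L * Rabs (x - y)) -> forall x, continuous h x.
Proof.
  intros H x. apply continuity_pt_filterlim.
  unfold continuity_pt, continue_in, limit1_in, limit_in.
  intros eps Heps. exists (eps / (Rabs L + 1)). split.
  { apply Rdiv_lt_0_compat; [lra| pose proof (Rabs_pos L); lra]. }
  intros y [_ Hy]. simpl in *. unfold R_dist in *.
  pose proof (H y x). pose proof (Rabs_pos L). pose proof (Rle_abs L).
  pose proof (Rabs_pos (y - x)).
  assert (Rabs (y - x) * (Rabs L + 1) < eps).
  { apply (Rmult_lt_compat_r (Rabs L + 1)) in Hy; [|lra].
    unfold Rdiv in Hy. rewrite Rmult_assoc, Rinv_l in Hy; lra. }
  nra.
Qed.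

Lemma ext_cont f : cont01 f -> forall x, continuous (ext f) x.
Proof.
  intros Hf x. unfold continuous, ext.
  eapply filterlim_comp; [| apply (Hf (cl x) (cl_I01 x))].
  intros P HP. unfold within in HP.
  assert (Hc : continuous cl x).
  { apply (lip_cont cl 1). intros; rewrite Rmult_1_l; apply cl_lip. }
  specialize (Hc _ HP). unfold filtermap in *.
  eapply filter_imp; [| exact Hc]. intros y Hy. apply Hy, cl_I01.
Qed.

Lemma cont_cont01 g : (forall x, continuous g x) -> cont01 g.
Proof.
  intros H x _. eapply filterlim_filter_le_1; [apply filter_le_within| apply H].
Qed.

Lemma cont_bounded g : (forall x, continuous g x) ->
  exists M, forall x, I01 x -> Rabs (g x) <= M.
Proof.
  intros H.
  destruct (continuity_ab_maj (fun x => Rabs (g x)) 0 1) as [m [Hm _]]; [lra| |].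
  { intros c _. apply continuity_pt_filterlim. apply continuous_Rabs_comp, H. }
  exists (Rabs (g m)). intros x Hx. apply Hm, Hx.
Qed.

Lemma supn_ge f : (forall x, continuous (ext f) x) ->
  forall x, I01 x -> Rabs (f x) <= supn f.
Proof.
  intros H x Hx.
  destruct (cont_bounded _ H) as [M HM].
  unfold supn.
  set (E := fun r => exists x, I01 x /\ r = Rabs (f x)).
  destruct (Lub_Rbar_correct E) as [Hub Hl].
  assert (H1 : Rbar_le (Rabs (f x)) (Lub_Rbar E)).
  { apply Hub. exists x; split; auto. }
  assert (H2 : Rbar_le (Lub_Rbar E) M).
  { apply Hl. intros r [z [Hz ->]]. simpl.
    specialize (HM z Hz). unfold ext in HM. rewrite cl_id in HM; auto. }
  remember (Lub_Rbar E) as l. destruct l; simpl in *; auto; contradiction.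
Qed.

Lemma supn_nonneg f : (forall x, continuous (ext f) x) -> 0 <= supn f.
Proof.
  intros H. eapply Rle_trans; [apply Rabs_pos| apply (supn_ge f H 0)].
  unfold I01; lra.
Qed.

Lemma RInt_opp_R (g : R -> R) a b : ex_RInt g a b -> RInt (fun x => - g x) a b = - RInt g a b.
Proof. intros H. apply (RInt_opp g a b H). Qed.
Lemma RInt_minus_R (f g : R -> R) a b : ex_RInt f a b -> ex_RInt g a b -> RInt (fun x => f x - g x) a b = RInt f a b - RInt g a b.
Proof. intros H1 H2. apply (RInt_minus f g a b H1 H2). Qed.
Lemma RInt_plus_R (f g : R -> R) a b : ex_RInt f a b -> ex_RInt g a b -> RInt (fun x => f x + g x) a b = RInt f a b + RInt g a b.
Proof. intros H1 H2. apply (RInt_plus f g a b H1 H2). Qed.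
Lemma RInt_scal_R (f : R -> R) a b l : ex_RInt f a b -> RInt (fun x => l * f x) a b = l * RInt f a b.
Proof. intros H1. apply (RInt_scal f a b l H1). Qed.
Lemma RInt_const_R a b c : RInt (fun _ => c) a b = (b - a) * c.
Proof. apply (RInt_const a b c). Qed.
Lemma ex_RInt_minus_R (f g : R -> R) a b : ex_RInt f a b -> ex_RInt g a b -> ex_RInt (fun x => f x - g x) a b.
Proof. intros H1 H2. apply (ex_RInt_minus f g a b H1 H2). Qed.
Lemma ex_RInt_opp_R (g : R -> R) a b : ex_RInt g a b -> ex_RInt (fun x => - g x) a b.
Proof. intros H. apply (ex_RInt_opp g a b H). Qed.
Lemma abs_RInt_le_fun (f g : R -> R) a b : a <= b -> ex_RInt f a b -> ex_RInt g a b ->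
  (forall x, a < x < b -> Rabs (f x) <= g x) -> Rabs (RInt f a b) <= RInt g a b.
Proof.
  intros Hab Hf Hg H.
  assert (H1 : RInt f a b <= RInt g a b).
  { apply RInt_le; auto. intros y Hy. specialize (H y Hy).
    pose proof (Rle_abs (f y)); lra. }
  assert (H2 : RInt (fun x => - g x) a b <= RInt f a b).
  { apply RInt_le; auto. apply ex_RInt_opp_R; auto.
    intros y Hy. specialize (H y Hy).
    pose proof (Rle_abs (- f y)). rewrite Rabs_Ropp in H0. lra. }
  rewrite RInt_opp_R in H2; auto.
  apply Rabs_le. lra.
Qed.


Lemma cont_ex_RInt (g : R -> R) a b : (forall x, continuous g x) -> ex_RInt g a b.
Proof. intros H. apply (ex_RInt_continuous (V:=R_CompleteNormedModule)). intros; apply H. Qed.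

Lemma gronwall (phi : R -> R) a b : (forall x, continuous phi x) -> 0 <= b ->
  (forall x, I01 x -> phi x <= a + b * RInt phi 0 x) ->
  forall x, I01 x -> phi x <= a * exp (b * x).
Proof.
  intros Hc Hb H x Hx.
  set (Phi := fun y => RInt phi 0 y).
  assert (HD : forall y, is_derive Phi y (phi y)).
  { intros y. apply is_derive_RInt with 0; [| apply Hc].
    apply filter_forall. intros t. apply RInt_correct, cont_ex_RInt, Hc. }
  set (G := fun y => exp (- b * y) * (a + b * Phi y)).
  assert (HG : forall y, is_derive G y (- b * exp (- b * y) * (a + b * Phi y) + exp (- b * y) * (b * phi y))).
  { intros y. unfold G.
    assert (H1 : is_derive (fun y => exp (- b * y)) y (- b * exp (- b * y))).
    { auto_derive; auto. ring. }
    assert (H2 : is_derive (fun y => a + b * Phi y) y (b * phi y)).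
    { assert (E := is_derive_unique _ _ _ (HD y)).
      auto_derive. exists (phi y); apply HD.
      rewrite (E : Derive (fun x0 => Phi x0) y = phi y). ring. }
    pose proof (is_derive_mult _ _ _ _ _ H1 H2 Rmult_comm) as H3.
    simpl in H3. unfold plus, mult in H3; simpl in H3. exact H3. }
  destruct (MVT_gen G 0 x _ (fun y _ => HG y)) as [c [Hcb Heq]].
  { intros y _. apply continuity_pt_filterlim. apply (ex_derive_continuous (V:=R_NormedModule)).
    eexists; apply HG. }
  destruct Hx as [Hx0 Hx1].
  rewrite Rmin_left, Rmax_right in Hcb by lra.
  assert (Hc1 : phi c <= a + b * Phi c) by (apply H; unfold I01; lra).
  assert (Hd : - b * exp (- b * c) * (a + b * Phi c) + exp (- b * c) * (b * phi c) <= 0).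
  { pose proof (exp_pos (- b * c)). 
    assert (0 <= exp (- b * c) * b) by nra. nra. }
  assert (HG0 : G 0 = a).
  { unfold G, Phi. rewrite RInt_point. unfold zero; simpl. rewrite Rmult_0_r, exp_0. ring. }
  assert (HGx : G x <= a) by nra.
  unfold G in HGx.
  assert (HP : phi x <= a + b * Phi x) by (apply H; unfold I01; lra).
  pose proof (exp_pos (b * x)).
  assert (Hee : exp (b * x) * exp (- b * x) = 1).
  { rewrite <- exp_plus. replace (b * x + - b * x) with 0 by ring. apply exp_0. }
  assert (exp (b * x) * (exp (- b * x) * (a + b * Phi x)) <= exp (b * x) * a)
    by (apply Rmult_le_compat_l; lra).
  rewrite <- Rmult_assoc, Hee in H1. nra.
Qed.


Lemma ext_id f x : I01 x -> ext f x = f x.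
Proof. intros H; unfold ext; rewrite cl_id; auto. Qed.

Lemma cmult (f g : R -> R) x : continuous f x -> continuous g x -> continuous (fun y => f y * g y) x.
Proof. intros; apply (continuous_mult f g); auto. Qed.
Lemma cminus (f g : R -> R) x : continuous f x -> continuous g x -> continuous (fun y => f y - g y) x.
Proof. intros; apply (continuous_minus f g); auto. Qed.
Lemma cplus (f g : R -> R) x : continuous f x -> continuous g x -> continuous (fun y => f y + g y) x.
Proof. intros; apply (continuous_plus f g); auto. Qed.
Lemma cconst (c x : R) : continuous (fun _ => c) x.
Proof. apply continuous_const. Qed.
Lemma cshift (f : R -> R) x : (forall z, continuous f z) -> forall y, continuous (fun y => f (x - y)) y.
Proof.
  intros H y. apply (continuous_comp (fun y => x - y) f). 2: apply H.
  apply (lip_cont _ 1). intros; unfold Rabs; repeat destruct Rcase_abs; lra.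
Qed.
Lemma cabs (f : R -> R) x : continuous f x -> continuous (fun y => Rabs (f y)) x.
Proof. apply continuous_Rabs_comp. Qed.

Lemma int_ext (b k : R -> R) x : I01 x ->
  RInt (fun y => b (x - y) * k y) 0 x = RInt (fun y => ext b (x - y) * ext k y) 0 x.
Proof.
  intros Hx. apply RInt_ext. destruct Hx.
  rewrite Rmin_left, Rmax_right by lra. intros y Hy.
  rewrite !ext_id; auto; unfold I01; lra.
Qed.

Lemma sol_bound b k B : kernel_sol b k -> cont01 b ->
  (forall z, I01 z -> Rabs (b z) <= B) -> forall x, I01 x -> Rabs (k x) <= B * exp (B * x).
Proof.
  intros [Hkc Hkeq] Hb HB x Hx.
  assert (B0 : 0 <= B) by (eapply Rle_trans; [apply Rabs_pos| apply (HB 0); unfold I01; lra]).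
  rewrite <- (ext_id k x Hx).
  apply (gronwall (fun y => Rabs (ext k y)) B B); auto.
  { intros; apply cabs, ext_cont; auto. }
  clear x Hx. intros x Hx. rewrite ext_id by auto. rewrite Hkeq by auto.
  rewrite int_ext by auto.
  eapply Rle_trans; [apply Rabs_triang|]. rewrite Rabs_Ropp.
  apply Rplus_le_compat; [apply HB; auto|].
  rewrite <- RInt_scal_R by (apply cont_ex_RInt; intros; apply cabs, ext_cont; auto).
  destruct Hx.
  apply abs_RInt_le_fun; auto.
  - apply cont_ex_RInt. intros; apply cmult; [apply cshift; intros; apply ext_cont; auto| apply ext_cont; auto].
  - apply cont_ex_RInt. intros; apply cmult; [apply cconst| apply cabs, ext_cont; auto].
  - intros y Hy. rewrite Rabs_mult. apply Rmult_le_compat_r; [apply Rabs_pos|].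
    apply HB, cl_I01.
Qed.

Lemma sol_diff b1 b2 k1 k2 B d K1 : kernel_sol b1 k1 -> kernel_sol b2 k2 ->
  cont01 b1 -> cont01 b2 -> 0 <= d -> 0 <= K1 -> 0 <= B ->
  (forall z, I01 z -> Rabs (b2 z) <= B) ->
  (forall z, I01 z -> Rabs (b1 z - b2 z) <= d) ->
  (forall z, I01 z -> Rabs (k1 z) <= K1) ->
  forall x, I01 x -> Rabs (k1 x - k2 x) <= d * (1 + K1) * exp (B * x).
Proof.
  intros [Hk1c Hk1] [Hk2c Hk2] Hb1 Hb2 Hd HK HB0 HB Hdb HK1 x Hx.
  rewrite <- (ext_id k1 x Hx), <- (ext_id k2 x Hx).
  apply (gronwall (fun y => Rabs (ext k1 y - ext k2 y)) (d * (1 + K1)) B); auto.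
  { intros; apply cabs, cminus; apply ext_cont; auto. }
  clear x Hx. intros x Hx. rewrite !ext_id by auto. rewrite Hk1, Hk2 by auto.
  rewrite (int_ext b1 k1), (int_ext b2 k2) by auto.
  assert (E1 : ex_RInt (fun y => ext b1 (x - y) * ext k1 y) 0 x).
  { apply cont_ex_RInt. intros; apply cmult; [apply cshift; intros; apply ext_cont; auto| apply ext_cont; auto]. }
  assert (E2 : ex_RInt (fun y => ext b2 (x - y) * ext k2 y) 0 x).
  { apply cont_ex_RInt. intros; apply cmult; [apply cshift; intros; apply ext_cont; auto| apply ext_cont; auto]. }
  assert (Ep : ex_RInt (fun y => Rabs (ext k1 y - ext k2 y)) 0 x).
  { apply cont_ex_RInt. intros; apply cabs, cminus; apply ext_cont; auto. }
  replace (- b1 x + RInt (fun y => ext b1 (x - y) * ext k1 y) 0 x -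
     (- b2 x + RInt (fun y => ext b2 (x - y) * ext k2 y) 0 x))
    with (- (b1 x - b2 x) + RInt (fun y => ext b1 (x - y) * ext k1 y - ext b2 (x - y) * ext k2 y) 0 x)
    by (rewrite RInt_minus_R by auto; ring).
  eapply Rle_trans; [apply Rabs_triang|]. rewrite Rabs_Ropp.
  destruct Hx as [Hx0 Hx1].
  assert (Hi : Rabs (RInt (fun y => ext b1 (x - y) * ext k1 y - ext b2 (x - y) * ext k2 y) 0 x)
     <= RInt (fun y => d * K1 + B * Rabs (ext k1 y - ext k2 y)) 0 x).
  { apply abs_RInt_le_fun; auto.
    - apply ex_RInt_minus_R; auto.
    - apply cont_ex_RInt. intros; apply cplus; [apply cconst| apply cmult; [apply cconst| apply cabs, cminus; apply ext_cont; auto]].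
    - intros y Hy.
      replace (ext b1 (x - y) * ext k1 y - ext b2 (x - y) * ext k2 y)
        with ((ext b1 (x - y) - ext b2 (x - y)) * ext k1 y + ext b2 (x - y) * (ext k1 y - ext k2 y)) by ring.
      eapply Rle_trans; [apply Rabs_triang|]. rewrite !Rabs_mult.
      apply Rplus_le_compat.
      + apply Rmult_le_compat; try apply Rabs_pos.
        * unfold ext; apply Hdb, cl_I01.
        * unfold ext; apply HK1, cl_I01.
      + apply Rmult_le_compat_r; [apply Rabs_pos|]. unfold ext; apply HB, cl_I01. }
  assert (Ec : ex_RInt (fun _ => d * K1) 0 x) by (apply cont_ex_RInt; intros; apply cconst).
  assert (Es : ex_RInt (fun y => B * Rabs (ext k1 y - ext k2 y)) 0 x).
  { apply cont_ex_RInt; intros; apply cmult; [apply cconst| apply cabs, cminus; apply ext_cont; auto]. }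
  rewrite RInt_plus_R in Hi by auto.
  rewrite RInt_const_R, RInt_scal_R in Hi by auto.
  assert (Rabs (b1 x - b2 x) <= d) by (apply Hdb; unfold I01; lra).
  assert (0 <= d * K1) by nra.
  nra.
Qed.


Lemma RInt_ext_R (f g : R -> R) a b : (forall x, Rmin a b < x < Rmax a b -> f x = g x) ->
  RInt f a b = RInt g a b.
Proof. intros H. apply RInt_ext. exact H. Qed.

Definition good (bt : R -> R) (B L : R) : Prop :=
  (forall x, continuous bt x) /\ (forall z, Rabs (bt z) <= B) /\
  (forall x y, Rabs (bt x - bt y) <= L * Rabs (x - y)) /\ 0 <= B /\ 0 <= L.

Definition Fop (bt k : R -> R) (x : R) : R := RInt (fun y => bt (x - y) * k y) 0 x.
Definition Top (bt k : R -> R) (x : R) : R := - bt x + Fop bt k (cl x).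
Fixpoint kn (bt : R -> R) (n : nat) : R -> R :=
  match n with O => fun _ => 0 | S n => Top bt (kn bt n) end.

Lemma ex_int bt k x : (forall z, continuous bt z) -> (forall z, continuous k z) -> forall a b,
  ex_RInt (fun y => bt (x - y) * k y) a b.
Proof. intros; apply cont_ex_RInt; intros; apply cmult; auto; apply cshift; auto. Qed.

Lemma Fop_lip_aux bt B L k K : good bt B L -> (forall z, continuous k z) ->
  (forall y, I01 y -> Rabs (k y) <= K) -> forall x x', I01 x -> I01 x' -> x' <= x ->
  Rabs (Fop bt k x - Fop bt k x') <= (B + L) * K * Rabs (x - x').
Proof.
  intros [Hc [HB [HL [HB0 HL0]]]] Hk HK x x' Hx Hx' Hle.
  assert (K0 : 0 <= K) by (eapply Rle_trans; [apply Rabs_pos| apply (HK 0); unfold I01; lra]).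
  unfold Fop.
  rewrite <- (RInt_Chasles (fun y => bt (x - y) * k y) 0 x' x) by (apply ex_int; auto).
  change (plus ?a ?b) with (a + b).
  replace (RInt (fun y => bt (x - y) * k y) 0 x' + RInt (fun y => bt (x - y) * k y) x' x -
     RInt (fun y => bt (x' - y) * k y) 0 x')
    with (RInt (fun y => bt (x - y) * k y - bt (x' - y) * k y) 0 x' + RInt (fun y => bt (x - y) * k y) x' x)
    by (rewrite RInt_minus_R by (apply ex_int; auto); ring).
  destruct Hx, Hx'.
  eapply Rle_trans; [apply Rabs_triang|].
  eapply Rle_trans; [apply Rplus_le_compat;
     [apply abs_RInt_le_const with (M := L * (x - x') * K)| apply abs_RInt_le_const with (M := B * K)]|].
  - lra.
  - apply ex_RInt_minus_R; apply ex_int; auto.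
  - intros t Ht. rewrite <- Rmult_minus_distr_r, Rabs_mult.
    apply Rmult_le_compat; try apply Rabs_pos.
    + eapply Rle_trans; [apply HL|]. replace (x - t - (x' - t)) with (x - x') by ring.
      rewrite Rabs_right by lra. lra.
    + apply HK; unfold I01; lra.
  - lra.
  - apply ex_int; auto.
  - intros t Ht. rewrite Rabs_mult.
    apply Rmult_le_compat; try apply Rabs_pos. apply HB. apply HK; unfold I01; lra.
  - rewrite Rabs_right by lra.
    assert (0 <= x - x') by lra.
    assert (0 <= L * (x - x') * K) by (apply Rmult_le_pos; [apply Rmult_le_pos|]; lra).
    nra.
Qed.

Lemma Fop_lip bt B L k K : good bt B L -> (forall z, continuous k z) ->
  (forall y, I01 y -> Rabs (k y) <= K) -> forall x x', I01 x -> I01 x' ->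
  Rabs (Fop bt k x - Fop bt k x') <= (B + L) * K * Rabs (x - x').
Proof.
  intros Hg Hk HK x x' Hx Hx'.
  destruct (Rle_dec x' x).
  - eapply Fop_lip_aux; eauto.
  - rewrite Rabs_minus_sym, (Rabs_minus_sym x). eapply Fop_lip_aux; eauto. lra.
Qed.

Lemma Top_lip bt B L k K : good bt B L -> (forall z, continuous k z) ->
  (forall y, I01 y -> Rabs (k y) <= K) -> forall x x',
  Rabs (Top bt k x - Top bt k x') <= (L + (B + L) * K) * Rabs (x - x').
Proof.
  intros Hg Hk HK x x'.
  pose proof Hg as [Hc [HB [HL [HB0 HL0]]]].
  assert (K0 : 0 <= K) by (eapply Rle_trans; [apply Rabs_pos| apply (HK 0); unfold I01; lra]).
  unfold Top.
  replace (- bt x + Fop bt k (cl x) - (- bt x' + Fop bt k (cl x')))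
    with (- (bt x - bt x') + (Fop bt k (cl x) - Fop bt k (cl x'))) by ring.
  eapply Rle_trans; [apply Rabs_triang|]. rewrite Rabs_Ropp.
  pose proof (HL x x').
  pose proof (Fop_lip bt B L k K Hg Hk HK (cl x) (cl x') (cl_I01 x) (cl_I01 x')).
  pose proof (cl_lip x x').
  assert ((B + L) * K * Rabs (cl x - cl x') <= (B + L) * K * Rabs (x - x'))
    by (apply Rmult_le_compat_l; [apply Rmult_le_pos|]; lra).
  lra.
Qed.

Lemma kn_cont bt B L : good bt B L -> forall n x, continuous (kn bt n) x.
Proof.
  intros Hg n. induction n; intros x.
  - apply cconst.
  - destruct (cont_bounded _ IHn) as [K HK].
    apply (lip_cont _ _ (Top_lip bt B L (kn bt n) K Hg IHn HK)).
Qed.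

Lemma RInt_exp c X : 0 < c -> RInt (fun y => exp (c * y)) 0 X = (exp (c * X) - 1) / c.
Proof.
  intros Hc. apply is_RInt_unique.
  replace ((exp (c * X) - 1) / c) with (minus (exp (c * X) / c) (exp (c * 0) / c)).
  2: { unfold minus, plus, opp; simpl. rewrite Rmult_0_r, exp_0. field. lra. }
  apply (is_RInt_derive (fun y => exp (c * y) / c)).
  - intros y _. auto_derive; auto. field. lra.
  - intros y _. apply (continuous_comp (fun y => c * y) exp).
    + apply (lip_cont _ (Rabs c)). intros. rewrite <- Rabs_mult. right; f_equal; ring.
    + apply (ex_derive_continuous (V:=R_NormedModule)). eexists; apply is_derive_exp.
Qed.

Lemma Top_diff bt B L k1 k0 x : good bt B L -> (forall z, continuous k1 z) -> (forall z, continuous k0 z) ->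
  Top bt k1 x - Top bt k0 x = RInt (fun y => bt (cl x - y) * (k1 y - k0 y)) 0 (cl x).
Proof.
  intros [Hc _] H1 H0. unfold Top, Fop.
  replace (- bt x + RInt (fun y => bt (cl x - y) * k1 y) 0 (cl x) -
    (- bt x + RInt (fun y => bt (cl x - y) * k0 y) 0 (cl x)))
    with (RInt (fun y => bt (cl x - y) * k1 y) 0 (cl x) - RInt (fun y => bt (cl x - y) * k0 y) 0 (cl x)) by ring.
  rewrite <- RInt_minus_R by (apply ex_int; auto).
  apply RInt_ext_R. intros; ring.
Qed.

Definition cc (B : R) := 2 * (B + 1).

Lemma d_bound bt B L : good bt B L -> forall n x,
  Rabs (kn bt (S n) x - kn bt n x) <= B * (/2) ^ n * exp (cc B * cl x).
Proof.
  intros Hg. pose proof Hg as [Hc [HB [HL [HB0 HL0]]]].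
  assert (Hc0 : 0 < cc B) by (unfold cc; lra).
  induction n; intros x.
  - change (kn bt 1 x) with (Top bt (fun _ => 0) x). simpl kn. unfold Top, Fop.
    rewrite (RInt_ext_R _ (fun _ => 0)) by (intros; ring). rewrite RInt_const_R.
    replace (- bt x + (cl x - 0) * 0 - 0) with (- bt x) by ring. rewrite Rabs_Ropp.
    pose proof (exp_ineq1_le (cc B * cl x)). pose proof (cl_I01 x) as [H0 H1].
    assert (0 <= cc B * cl x) by nra.
    simpl. specialize (HB x). nra.
  - change (kn bt (S (S n)) x) with (Top bt (kn bt (S n)) x).
    change (kn bt (S n) x) with (Top bt (kn bt n) x).
    rewrite (Top_diff bt B L) by (first [exact Hg | apply (kn_cont bt B L Hg)]).
    pose proof (cl_I01 x) as [H0 H1].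
    set (X := cl x). set (q := (/2) ^ n).
    assert (q0 : 0 <= q) by (apply pow_le; lra).
    eapply Rle_trans; [apply abs_RInt_le_fun with (g := fun y => B * (B * q * exp (cc B * y)))|].
    + auto.
    + apply ex_int; auto. intros; apply cminus; apply (kn_cont bt B L Hg).
    + apply cont_ex_RInt. intros; apply cmult; [apply cconst|]. apply cmult; [apply cconst|].
      apply (continuous_comp (fun y => cc B * y) exp).
      * apply (lip_cont _ (Rabs (cc B))). intros. rewrite <- Rabs_mult. right; f_equal; ring.
      * apply (ex_derive_continuous (V:=R_NormedModule)). eexists; apply is_derive_exp.
    + intros y Hy. rewrite Rabs_mult. apply Rmult_le_compat; try apply Rabs_pos; auto.
      unfold X in Hy. pose proof (IHn y) as Hn. rewrite cl_id in Hn by (unfold I01; lra). exact Hn.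
    + rewrite RInt_scal_R, RInt_scal_R, RInt_exp by (auto; try apply cont_ex_RInt; intros;
        try apply cmult; try apply cconst;
        (apply (continuous_comp (fun y => cc B * y) exp);
        [apply (lip_cont _ (Rabs (cc B))); intros; rewrite <- Rabs_mult; right; f_equal; ring
        | apply (ex_derive_continuous (V:=R_NormedModule)); eexists; apply is_derive_exp])).
      set (e := exp (cc B * X)). set (t := (e - 1) / cc B).
      assert (0 <= cc B * X) by (unfold X; apply Rmult_le_pos; lra).
      assert (e1 : 1 <= e) by (pose proof (exp_ineq1_le (cc B * X)); unfold e; lra).
      assert (Ht : t * cc B = e - 1) by (unfold t; field; lra).
      assert (t0 : 0 <= t) by (unfold t; apply Rdiv_le_0_compat; lra).
      assert (Bt : B * t * 2 <= e - 1) by (unfold cc in Ht; nra).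
      simpl. fold q.
      assert (0 <= B * q) by nra.
      assert (B * q * (B * t) <= B * q * (e / 2)) by (apply Rmult_le_compat_l; lra).
      nra.
Qed.

Lemma small_lem C a eps : 0 <= C -> 0 <= a -> 0 < eps -> a < eps / (C + 1) -> C * a < eps.
Proof.
  intros HC Ha He H.
  assert (E : eps / (C + 1) * (C + 1) = eps) by (field; lra).
  assert (C * a <= C * (eps / (C + 1))) by (apply Rmult_le_compat_l; lra).
  assert (0 < eps / (C + 1)) by (apply Rdiv_lt_0_compat; lra).
  nra.
Qed.

Lemma zero_of_small r A : 0 <= A -> (forall n, Rabs r <= A * (/2) ^ n) -> r = 0.
Proof.
  intros HA H. destruct (Req_dec r 0) as [|Hr]; auto. exfalso.
  pose proof (Rabs_pos_lt r Hr).
  destruct (pow_lt_1_zero (/2) ltac:(rewrite Rabs_right; lra) (Rabs r / (A + 1)))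
    as [N HN]; [apply Rdiv_lt_0_compat; lra|].
  specialize (HN N (le_n N)). specialize (H N).
  assert (0 <= (/2) ^ N) by (apply pow_le; lra).
  rewrite Rabs_right in HN by lra.
  pose proof (small_lem A _ _ HA H1 H0 HN). lra.
Qed.

Definition EE (B : R) := exp (cc B).

Lemma d_bound2 bt B L : good bt B L -> forall n x,
  Rabs (kn bt (S n) x - kn bt n x) <= B * EE B * (/2) ^ n.
Proof.
  intros Hg n x. pose proof Hg as [_ [_ [_ [HB0 _]]]].
  eapply Rle_trans; [apply (d_bound bt B L Hg)|].
  assert (exp (cc B * cl x) <= EE B).
  { unfold EE. destruct (cl_I01 x). assert (0 < cc B) by (unfold cc; lra).
    destruct (Rle_lt_or_eq_dec (cc B * cl x) (cc B)) as [h|h]; [nra| left; apply exp_increasing; auto| rewrite h; lra]. }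
  assert (0 <= (/2) ^ n) by (apply pow_le; lra).
  assert (0 <= B * (/2) ^ n) by nra.
  nra.
Qed.

Lemma kn_cauchy bt B L : good bt B L -> forall n p x,
  Rabs (kn bt (n + p) x - kn bt n x) <= 2 * B * EE B * ((/2) ^ n - (/2) ^ (n + p)).
Proof.
  intros Hg n p x. induction p.
  - rewrite Nat.add_0_r. unfold Rminus. rewrite !Rplus_opp_r, Rabs_R0. lra.
  - rewrite Nat.add_succ_r.
    replace (kn bt (S (n + p)) x - kn bt n x) with
      ((kn bt (S (n + p)) x - kn bt (n + p) x) + (kn bt (n + p) x - kn bt n x)) by ring.
    eapply Rle_trans; [apply Rabs_triang|].
    pose proof (d_bound2 bt B L Hg (n + p) x).
    simpl pow. set (qq := (/2) ^ (n + p)) in *. set (a := EE B) in *. nra.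
Qed.

Definition Cb (B : R) := 2 * B * EE B.

Lemma Cb_nonneg B : 0 <= B -> 0 <= Cb B.
Proof. intros; unfold Cb, EE. pose proof (exp_pos (cc B)). nra. Qed.

Lemma kn_bd bt B L : good bt B L -> forall n x, Rabs (kn bt n x) <= Cb B.
Proof.
  intros Hg n x. pose proof Hg as [_ [_ [_ [HB0 _]]]].
  pose proof (kn_cauchy bt B L Hg 0 n x). simpl kn in H at 2. change (0 + n)%nat with n in H.
  rewrite Rminus_0_r in H. simpl pow in H.
  assert (0 <= (/2) ^ n) by (apply pow_le; lra).
  pose proof (Cb_nonneg B HB0). unfold Cb in *. nra.
Qed.

Lemma kn_conv bt B L : good bt B L -> forall x, ex_finite_lim_seq (fun n => kn bt n x).
Proof.
  intros Hg x. pose proof Hg as [_ [_ [_ [HB0 _]]]].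
  apply ex_lim_seq_cauchy_corr. intros eps.
  pose proof (Cb_nonneg B HB0) as HC.
  destruct (pow_lt_1_zero (/2) ltac:(rewrite Rabs_right; lra) (eps / (Cb B + 1)))
    as [N HN]; [apply Rdiv_lt_0_compat; [apply cond_pos| lra]|].
  exists N. intros n m Hn Hm.
  assert (Hk : forall a b, (N <= a)%nat -> (a <= b)%nat -> Rabs (kn bt b x - kn bt a x) < eps).
  { intros a b Ha Hb. replace b with (a + (b - a))%nat by lia.
    eapply Rle_lt_trans; [apply (kn_cauchy bt B L Hg)|].
    assert (0 <= (/2) ^ (a + (b - a))) by (apply pow_le; lra).
    assert (0 <= (/2) ^ a) by (apply pow_le; lra).
    specialize (HN a Ha). rewrite Rabs_right in HN by lra.
    pose proof (small_lem (Cb B) _ _ HC H0 (cond_pos eps) HN).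
    unfold Cb in *. nra. }
  destruct (Nat.le_ge_cases n m).
  - rewrite Rabs_minus_sym. apply Hk; auto.
  - apply Hk; auto.
Qed.

Definition ksol (bt : R -> R) (x : R) : R := real (Lim_seq (fun n => kn bt n x)).

Lemma ksol_lim bt B L : good bt B L -> forall x, is_lim_seq (fun n => kn bt n x) (ksol bt x).
Proof.
  intros Hg x. destruct (kn_conv bt B L Hg x) as [l Hl].
  unfold ksol. rewrite (is_lim_seq_unique _ _ Hl). exact Hl.
Qed.

Lemma ksol_tail bt B L : good bt B L -> forall n x,
  Rabs (ksol bt x - kn bt n x) <= Cb B * (/2) ^ n.
Proof.
  intros Hg n x.
  assert (H := is_lim_seq_le_loc (fun m => Rabs (kn bt m x - kn bt n x)) (fun _ => Cb B * (/2) ^ n)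
     (Rabs (ksol bt x - kn bt n x)) (Cb B * (/2) ^ n)).
  apply H.
  - exists n. intros m Hm. replace m with (n + (m - n))%nat by lia.
    eapply Rle_trans; [apply (kn_cauchy bt B L Hg)|].
    assert (0 <= (/2) ^ (n + (m - n))) by (apply pow_le; lra).
    pose proof Hg as [_ [_ [_ [HB0 _]]]]. pose proof (Cb_nonneg B HB0).
    unfold Cb in *. nra.
  - apply (is_lim_seq_abs _ (Finite (ksol bt x - kn bt n x))).
    apply is_lim_seq_minus'; [apply (ksol_lim bt B L Hg)| apply is_lim_seq_const].
  - apply is_lim_seq_const.
Qed.

Definition Lam (B L : R) := L + (B + L) * Cb B.

Lemma kn_lip bt B L : good bt B L -> forall n x y,
  Rabs (kn bt n x - kn bt n y) <= Lam B L * Rabs (x - y).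
Proof.
  intros Hg n x y. pose proof Hg as [_ [_ [_ [HB0 HL0]]]]. pose proof (Cb_nonneg B HB0).
  destruct n.
  - simpl. rewrite Rminus_0_r, Rabs_R0. apply Rmult_le_pos; [unfold Lam; nra| apply Rabs_pos].
  - apply (Top_lip bt B L (kn bt n) (Cb B) Hg (kn_cont bt B L Hg n)).
    intros; apply (kn_bd bt B L Hg).
Qed.

Lemma ksol_lip bt B L : good bt B L -> forall x y,
  Rabs (ksol bt x - ksol bt y) <= Lam B L * Rabs (x - y).
Proof.
  intros Hg x y.
  assert (H := is_lim_seq_le (fun m => Rabs (kn bt m x - kn bt m y)) (fun _ => Lam B L * Rabs (x - y))
     (Rabs (ksol bt x - ksol bt y)) (Lam B L * Rabs (x - y))).
  apply H.
  - intros; apply (kn_lip bt B L Hg).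
  - apply (is_lim_seq_abs _ (Finite (ksol bt x - ksol bt y))).
    apply is_lim_seq_minus'; apply (ksol_lim bt B L Hg).
  - apply is_lim_seq_const.
Qed.

Lemma ksol_cont bt B L : good bt B L -> forall x, continuous (ksol bt) x.
Proof. intros Hg. apply (lip_cont _ (Lam B L)). apply (ksol_lip bt B L Hg). Qed.

Lemma ksol_eq bt B L : good bt B L -> forall x, I01 x ->
  ksol bt x = - bt x + Fop bt (ksol bt) x.
Proof.
  intros Hg x Hx. pose proof Hg as [Hc [HB [_ [HB0 _]]]].
  pose proof (Cb_nonneg B HB0) as HC.
  apply Rminus_diag_uniq.
  apply (zero_of_small _ ((1 + B) * Cb B)); [nra|]. intros n.
  assert (Hkn : kn bt (S n) x = - bt x + Fop bt (kn bt n) x).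
  { change (kn bt (S n) x) with (Top bt (kn bt n) x). unfold Top. rewrite cl_id; auto. }
  replace (ksol bt x - (- bt x + Fop bt (ksol bt) x)) with
    ((ksol bt x - kn bt (S n) x) + (Fop bt (kn bt n) x - Fop bt (ksol bt) x)) by (rewrite Hkn; ring).
  eapply Rle_trans; [apply Rabs_triang|].
  assert (H1 := ksol_tail bt B L Hg (S n) x). simpl pow in H1.
  assert (H2 : Rabs (Fop bt (kn bt n) x - Fop bt (ksol bt) x) <= (x - 0) * (B * (Cb B * (/2) ^ n))).
  { unfold Fop. rewrite <- RInt_minus_R by (apply ex_int; auto; first [apply (kn_cont bt B L Hg)| apply (ksol_cont bt B L Hg)]).
    rewrite (RInt_ext_R _ (fun y => bt (x - y) * (kn bt n y - ksol bt y))) by (intros; ring).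
    destruct Hx.
    apply abs_RInt_le_const; auto.
    - apply ex_int; auto. intros; apply cminus; [apply (kn_cont bt B L Hg)| apply (ksol_cont bt B L Hg)].
    - intros t Ht. rewrite Rabs_mult. apply Rmult_le_compat; try apply Rabs_pos; auto.
      rewrite Rabs_minus_sym. apply (ksol_tail bt B L Hg). }
  assert (0 <= (/2) ^ n) by (apply pow_le; lra).
  assert (0 <= Cb B * (/2) ^ n) by nra.
  assert (0 <= B * (Cb B * (/2) ^ n)) by nra.
  destruct Hx.
  assert ((x - 0) * (B * (Cb B * (/2) ^ n)) <= B * (Cb B * (/2) ^ n)) by nra.
  nra.
Qed.

Lemma exists_sol b : cont01 b -> lip01 b -> exists k, kernel_sol b k.
Proof.
  intros Hc [L0 HL0].
  set (bt := ext b). set (L := Rmax 0 L0).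
  assert (Hg : good bt (supn b) L).
  { split; [|split; [|split; [|split]]].
    - apply ext_cont; auto.
    - intros z. unfold bt, ext. apply supn_ge; [apply ext_cont; auto| apply cl_I01].
    - intros x y. unfold bt, ext.
      eapply Rle_trans; [apply HL0; apply cl_I01|].
      pose proof (cl_lip x y). pose proof (Rmax_r 0 L0). pose proof (Rmax_l 0 L0).
      pose proof (Rabs_pos (cl x - cl y)).
      fold L in H0, H1.
      assert (L0 * Rabs (cl x - cl y) <= L * Rabs (cl x - cl y)) by (apply Rmult_le_compat_r; lra).
      assert (L * Rabs (cl x - cl y) <= L * Rabs (x - y)) by (apply Rmult_le_compat_l; lra).
      lra.
    - apply supn_nonneg, ext_cont; auto.
    - apply Rmax_l. }
  exists (ksol bt). split.
  - apply cont_cont01, (ksol_cont bt _ _ Hg).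
  - intros x Hx. rewrite (ksol_eq bt _ _ Hg x Hx). unfold bt at 1. rewrite ext_id by auto.
    f_equal. unfold Fop. apply RInt_ext_R. destruct Hx.
    rewrite Rmin_left, Rmax_right by lra. intros y Hy.
    unfold bt. rewrite ext_id; auto. unfold I01; lra.
Qed.


Lemma exp_le a b : a <= b -> exp a <= exp b.
Proof. intros H. destruct (Rle_lt_or_eq_dec _ _ H) as [H1|H1]; [left; apply exp_increasing; auto| subst; lra]. Qed.

Lemma Kop_sol b : cont01 b -> lip01 b -> kernel_sol b (Kop b).
Proof. intros; unfold Kop; apply epsilon_spec, exists_sol; auto. Qed.

Theorem lemma4 (Bb Bu : R) (beta1 beta2 u1 u2 : R -> R) :
  0 < Bb -> 0 < Bu ->
  cont01 beta1 -> cont01 beta2 -> cont01 u1 -> cont01 u2 ->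
  lip01 beta1 -> lip01 beta2 -> lip01 u1 -> lip01 u2 ->
  supn beta1 <= Bb -> supn beta2 <= Bb ->
  supn u1 <= Bu -> supn u2 <= Bu ->
  Rabs (Uop beta1 u1 - Uop beta2 u2) <=
    (Bb * exp Bb + Bu * exp (3 * Bb)) *
    Rmax (supn (fun x => beta1 x - beta2 x)) (supn (fun x => u1 x - u2 x)).
Proof.
  intros HBb HBu Cb1 Cb2 Cu1 Cu2 Lb1 Lb2 _ _ Sb1 Sb2 Su1 Su2.
  pose proof (Kop_sol _ Cb1 Lb1) as HK1.
  pose proof (Kop_sol _ Cb2 Lb2) as HK2.
  set (k1 := Kop beta1) in *. set (k2 := Kop beta2) in *.
  set (db := supn (fun x => beta1 x - beta2 x)).
  set (du := supn (fun x => u1 x - u2 x)).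
  assert (Cdb : forall x, continuous (ext (fun x => beta1 x - beta2 x)) x).
  { intros; unfold ext; apply (cminus (ext beta1) (ext beta2)); apply ext_cont; auto. }
  assert (Cdu : forall x, continuous (ext (fun x => u1 x - u2 x)) x).
  { intros; unfold ext; apply (cminus (ext u1) (ext u2)); apply ext_cont; auto. }
  assert (Hdb0 : 0 <= db) by (apply supn_nonneg; auto).
  assert (Hdu0 : 0 <= du) by (apply supn_nonneg; auto).
  assert (Hb1 : forall z, I01 z -> Rabs (beta1 z) <= Bb).
  { intros; eapply Rle_trans; [apply supn_ge; auto; apply ext_cont; auto| auto]. }
  assert (Hb2 : forall z, I01 z -> Rabs (beta2 z) <= Bb).
  { intros; eapply Rle_trans; [apply supn_ge; auto; apply ext_cont; auto| auto]. }
  assert (Hu2 : forall z, I01 z -> Rabs (u2 z) <= Bu).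
  { intros; eapply Rle_trans; [apply supn_ge; auto; apply ext_cont; auto| auto]. }
  assert (Hdb : forall z, I01 z -> Rabs (beta1 z - beta2 z) <= db).
  { intros; apply (supn_ge (fun x => beta1 x - beta2 x)); auto. }
  assert (Hdu : forall z, I01 z -> Rabs (u1 z - u2 z) <= du).
  { intros; apply (supn_ge (fun x => u1 x - u2 x)); auto. }
  pose proof (exp_pos Bb) as Hep.
  assert (Hk1 : forall z, I01 z -> Rabs (k1 z) <= Bb * exp Bb).
  { intros z Hz. eapply Rle_trans; [apply (sol_bound beta1); eauto|].
    apply Rmult_le_compat_l; [lra|]. apply exp_le. destruct Hz; nra. }
  assert (HK0 : 0 <= Bb * exp Bb) by nra.
  assert (He3 : (1 + Bb * exp Bb) * exp Bb <= exp (3 * Bb)).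
  { replace (3 * Bb) with (Bb + Bb + Bb) by ring. rewrite !exp_plus.
    pose proof (exp_ineq1_le Bb). nra. }
  assert (Hk12 : forall z, I01 z -> Rabs (k1 z - k2 z) <= db * exp (3 * Bb)).
  { intros z Hz. eapply Rle_trans; [apply (sol_diff beta1 beta2 k1 k2 Bb db (Bb * exp Bb)); eauto; lra|].
    assert (exp (Bb * z) <= exp Bb) by (apply exp_le; destruct Hz; nra).
    assert (0 <= db * (1 + Bb * exp Bb)) by nra.
    assert (db * (1 + Bb * exp Bb) * exp (Bb * z) <= db * (1 + Bb * exp Bb) * exp Bb)
      by (apply Rmult_le_compat_l; auto).
    nra. }
  assert (EI : forall (b u : R -> R), cont01 b -> lip01 b -> cont01 u ->
     ex_RInt (fun y => Kop b (1 - y) * u y) 0 1).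
  { intros b u Cb Lb Cu. destruct (Kop_sol b Cb Lb) as [Ckb _].
    apply (ex_RInt_ext (fun y => ext (Kop b) (1 - y) * ext u y)).
    - rewrite Rmin_left, Rmax_right by lra. intros y Hy.
      rewrite !ext_id; auto; unfold I01; lra.
    - apply cont_ex_RInt. intros; apply cmult; [apply cshift; intros; apply ext_cont; auto| apply ext_cont; auto]. }
  unfold Uop. rewrite <- RInt_minus_R by auto.
  change (Kop beta1) with k1; change (Kop beta2) with k2.
  eapply Rle_trans; [apply abs_RInt_le_const with (M := Bb * exp Bb * du + db * exp (3 * Bb) * Bu)|].
  - lra.
  - apply ex_RInt_minus_R; [exact (EI _ _ Cb1 Lb1 Cu1)| exact (EI _ _ Cb2 Lb2 Cu2)].
  - intros y Hy.
    replace (k1 (1 - y) * u1 y - k2 (1 - y) * u2 y)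
      with (k1 (1 - y) * (u1 y - u2 y) + (k1 (1 - y) - k2 (1 - y)) * u2 y) by ring.
    eapply Rle_trans; [apply Rabs_triang|]. rewrite !Rabs_mult.
    assert (I01 (1 - y)) by (unfold I01; lra).
    apply Rplus_le_compat; apply Rmult_le_compat; try apply Rabs_pos; auto.
  - assert (db <= Rmax db du) by apply Rmax_l.
    assert (du <= Rmax db du) by apply Rmax_r.
    pose proof (exp_pos (3 * Bb)).
    assert (Bb * exp Bb * du <= Bb * exp Bb * Rmax db du) by (apply Rmult_le_compat_l; auto).
    assert (Bu * exp (3 * Bb) * db <= Bu * exp (3 * Bb) * Rmax db du) by (apply Rmult_le_compat_l; nra).
    nra.
Qed.
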